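(* Let $d\ge 1$ and $n\ge d+2$, and let $\mathcal{F}$, $B_i$ be as in the context. The number of indices $i\in[m]$ with $|B_i|=d$ is at most $\binom{n-1}{d}$. Moreover, equality holds if and only if $\{F_i: i\in[m],\ |B_i|=d\}$ is a star of maximum size, i.e. equals $\{F\in\binom{[n]}{d+1}: a\in F\}$ for some $a\in[n]$.
   Context: Let $\mathcal{F}=\{F_1,\dots,F_m\}\subseteq\binom{[n]}{d+1}$ consist of distinct sets and have VC-dimension at most $d$ (no $(d+1)$-set $S$ is shattered, i.e. no $S$ such that every $A\subseteq S$ equals $F\cap S$ for some $F\in\mathcal{F}$). For $i\in[m]$, call $B\subsetneq F_i$ admissible for $F_i$ if $F\cap F_i\neq B$ for every $F\in\mathcal{F}$ (admissible sets exist by the VC-dimension assumption). For each $i$, $B_i$ is a fixed admissible set for $F_i$ of maximum cardinality among all admissible sets for $F_i$. *)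

(* Defs.v *)
From mathcomp Require Import all_boot.
Set Implicit Arguments. Unset Strict Implicit. Unset Printing Implicit Defensive.

(* Ground set [n] is 'I_n; the family F_1..F_m is an indexed family
   F : 'I_m -> {set 'I_n}. *)

Definition shattered (n m : nat) (F : 'I_m -> {set 'I_n}) (S : {set 'I_n}) : Prop :=
  forall A : {set 'I_n}, A \subset S -> exists j : 'I_m, F j :&: S = A.

Definition VCdim_le (n m : nat) (F : 'I_m -> {set 'I_n}) (d : nat) : Prop :=
  forall S : {set 'I_n}, #|S| = d.+1 -> ~ shattered F S.

Definition admissible (n m : nat) (F : 'I_m -> {set 'I_n}) (i : 'I_m)
  (B : {set 'I_n}) : Prop :=
  B \proper F i /\ forall j : 'I_m, F j :&: F i <> B.

(* Main.v *)
Require Import Defs.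
From mathcomp Require Import all_boot.

Section Claim.
Variables (d n m : nat) (F B : 'I_m -> {set 'I_n}).
Hypotheses (Finj : injective F) (Fc : forall i, #|F i| = d.+1)
  (adm : forall i, admissible F i (B i)).

Definition II := [set i : 'I_m | #|B i| == d].

Lemma sBF i : B i \subset F i.
Proof. by have [/andP[]] := adm i. Qed.

Lemma key i j : #|B i| = d -> B i \subset F j -> j = i.
Proof.
move=> Bd sub.
have sBI : B i \subset F j :&: F i by rewrite subsetI sub sBF.
case: (eqVneq (F j :&: F i) (B i)) => [E|ne]; first by case: ((proj2 (adm i)) j).
have pr : B i \proper F j :&: F i by rewrite properEneq eq_sym ne sBI.
have := proper_card pr; rewrite Bd => lt.
have /eqP E : F j :&: F i == F i by rewrite eqEcard subsetIr Fc lt.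
have sFij : F i \subset F j by rewrite -E subsetIl.
by apply: Finj; apply/eqP; rewrite eq_sym eqEcard sFij !Fc leqnn.
Qed.

Lemma Bform i w : #|B i| = d -> w \in F i -> w \notin B i -> B i = F i :\ w.
Proof.
move=> Bd wF wB; apply/eqP; rewrite eqEcard.
have := cardsD1 w (F i); rewrite wF Fc add1n => -[<-]; rewrite Bd leqnn andbT.
apply/subsetP => u uB; rewrite !inE (subsetP (sBF i)) // andbT.
by apply: contraNneq wB => <-.
Qed.

Lemma exw i : exists2 w, w \in F i & w \notin B i.
Proof. by have [/properP[_ [w ? ?]] _] := adm i; exists w. Qed.

Definition phi (p : 'I_m * 'I_n) :=
  if p.2 \in F p.1 then (F p.1 :\ p.2, p.2) else (B p.1, p.2).

Definition DD := setX II [set: 'I_n].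
Definition Fl := [set q : {set 'I_n} * 'I_n | (#|q.1| == d) && (q.2 \notin q.1)].

Lemma phi_inj : {in DD &, injective phi}.
Proof.
move=> [i y] [j y'] /setXP [iI _] /setXP [jI _]; rewrite /phi /=.
move: iI jI; rewrite !inE => /eqP iI /eqP jI.
case: ifP => yi; case: ifP => y'j; case => E1 E2; subst y'.
- suff : F i = F j by move/Finj ->.
  by rewrite -(setD1K yi) -(setD1K y'j) E1.
- have : B j \subset F i by rewrite -E1 subsetDl.
  by move/(key _ _ jI) => ij; subst j; rewrite yi in y'j.
- have : B i \subset F j by rewrite E1 subsetDl.
  by move/(key _ _ iI) => ij; subst j; rewrite yi in y'j.
- have : B i \subset F j by rewrite E1 sBF.
  by move/(key _ _ iI) ->.
Qed.

Lemma phi_sub : phi @: DD \subset Fl.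
Proof.
apply/subsetP => q /imsetP [[i y] /setXP[iI _] ->]; rewrite /phi /=.
move: iI; rewrite inE => /eqP iI.
case: ifP => yi; rewrite inE /=.
- by have := cardsD1 y (F i); rewrite yi Fc add1n => -[<-]; rewrite eqxx setD11.
- rewrite iI eqxx /=; apply: contraFN yi; exact: (subsetP (sBF i)).
Qed.

Lemma card_Fl : #|Fl| = n * 'C(n.-1, d).
Proof.
rewrite mul_bin_down -sum1_card.
transitivity (\sum_(T : {set 'I_n} | #|T| == d) \sum_(y : 'I_n | y \notin T) 1).
  by rewrite pair_big_dep; apply: eq_bigl => q /=; rewrite inE.
rewrite (eq_bigr (fun _ => n - d)); last first.
  move=> T /eqP Td; rewrite -[n in n - _](card_ord n) -(cardsC T) Td addKn -sum1_card.
  by apply: eq_bigl => y; rewrite inE.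
rewrite (eq_bigl (fun T => T \in [set T : {set 'I_n} | #|T| == d])); last by move=> T; rewrite inE.
by rewrite sum_nat_const card_draws card_ord mulnC.
Qed.

Lemma bound : #|II| * n <= n * 'C(n.-1, d).
Proof.
have -> : #|II| * n = #|DD| by rewrite /DD cardsX cardsT card_ord.
rewrite -card_Fl -(card_in_imset phi_inj).
exact: subset_leq_card phi_sub.
Qed.

Lemma card_star a : #|[set S : {set 'I_n} | (#|S| == d.+1) && (a \in S)]| = 'C(n.-1, d).
Proof.
have -> : [set S : {set 'I_n} | (#|S| == d.+1) && (a \in S)] =
  (fun T => a |: T) @: [set T : {set 'I_n} | T \subset [set~ a] & #|T| == d].
  apply/setP => S; rewrite inE; apply/idP/imsetP.
  - case/andP => /eqP Sd aS; exists (S :\ a); last by rewrite setD1K.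
    rewrite inE; apply/andP; split.
      by apply/subsetP => u; rewrite !inE => /andP[].
    by have := cardsD1 a S; rewrite aS Sd add1n => -[<-].
  - move=> [T]; rewrite inE => /andP [sT /eqP Td] ->.
    have aT : a \notin T by apply/negP => /(subsetP sT); rewrite !inE eqxx.
    by rewrite cardsU1 aT Td setU11 eqxx.
rewrite card_in_imset ?cards_draws ?cardsC1 ?card_ord //.
move=> T1 T2; rewrite !inE => /andP [s1 _] /andP [s2 _] E.
have a1 : a \notin T1 by apply/negP => /(subsetP s1); rewrite !inE eqxx.
have a2 : a \notin T2 by apply/negP => /(subsetP s2); rewrite !inE eqxx.
by rewrite -(setU1K a1) -(setU1K a2) E.
Qed.

Section Eq.
Hypothesis surj : forall (T : {set 'I_n}) (z : 'I_n), #|T| = d -> z \notin T -> exists2 k, k \in II &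
  ((z \in F k /\ F k :\ z = T) \/ (z \notin F k /\ B k = T)).

Lemma step j a y z : j \in II -> a \in F j -> a \notin B j -> y \in F j -> y != a ->
  z \notin F j -> exists2 k, k \in II & (F k = z |: (F j :\ y)) /\ a \notin B k.
Proof.
move=> jI aF aB yF ya zF.
have jd : #|B j| = d by move: jI; rewrite inE => /eqP.
have Bj := Bform _ _ jd aF aB.
have yB : y \in B j by rewrite Bj !inE ya.
have Td : #|F j :\ y| = d by have := cardsD1 y (F j); rewrite yF Fc add1n => -[<-].
have zT : z \notin F j :\ y by rewrite !inE negb_and zF orbT.
have [k kI [[zk Ek] | [zk Ek]]] := surj _ _ Td zT; last first.
  have : B k \subset F j by rewrite Ek subsetDl.
  move: kI; rewrite inE => /eqP kd /(key _ _ kd) jk; subst k.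
  by move: aB; rewrite Ek !inE eq_sym ya aF.
have Fk : F k = z |: (F j :\ y) by rewrite -Ek setD1K.
exists k => //; split => //.
have kd : #|B k| = d by move: kI; rewrite inE => /eqP.
apply/negP => aBk.
have [x xF xB] := exw k.
have Bk := Bform _ _ kd xF xB.
have xz : x != z.
  apply/negP => /eqP xz; subst x.
  have : B k \subset F j by rewrite Bk Ek subsetDl.
  by move/(key _ _ kd) => jk; subst k; rewrite zk in zF.
have xa : x != a by apply: contraNneq xB => ->.
have : x \in F j /\ x != y.
  by move: xF; rewrite Fk !inE (negbTE xz) /= => /andP[-> ->].
case=> xFj xy.
have T'd : #|F j :\ x| = d by have := cardsD1 x (F j); rewrite xFj Fc add1n => -[<-].
have zT' : z \notin F j :\ x by rewrite !inE negb_and zF orbT.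
have [l lI [[zl El] | [zl El]]] := surj _ _ T'd zT'; last first.
  have : B l \subset F j by rewrite El subsetDl.
  move: lI; rewrite inE => /eqP ld /(key _ _ ld) jl; subst l.
  have : x \in B j by rewrite Bj !inE xa xFj.
  by rewrite El !inE eqxx.
have Fl' : F l = z |: (F j :\ x) by rewrite -El setD1K.
have : B k \subset F l.
  apply/subsetP => u; rewrite Bk Fk Fl' !inE.
  case: (u == z) => //=; by move=> /andP [-> /andP [_ ->]].
move/(key _ _ kd) => lk; subst l.
have : y \in F k.
  rewrite Fl' !inE yF andbT.
  by apply/orP; right; rewrite eq_sym.
by rewrite Fk !inE eqxx /= orbF => /eqP yz; subst z; rewrite yF in zF.
Qed.

Lemma reach a k : forall j (S : {set 'I_n}), j \in II -> a \in F j -> a \notin B j ->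
  #|S| = d.+1 -> a \in S -> #|S :\: F j| = k -> exists2 l, l \in II & F l = S.
Proof.
elim: k => [|k IH] j S jI aF aB Sd aS Sk.
  exists j => //; apply/eqP; rewrite eq_sym eqEcard Fc Sd leqnn andbT.
  by rewrite -setD_eq0 -cards_eq0 Sk.
have [z zS] : exists z, z \in S :\: F j.
  by apply/set0Pn; rewrite -card_gt0 Sk.
have [y yF] : exists y, y \in F j :\: S.
  apply/set0Pn; apply: contraTneq isT => /eqP; rewrite setD_eq0 => sub.
  have /eqP E : F j == S by rewrite eqEcard sub Fc Sd leqnn.
  by move: Sk; rewrite E setDv cards0.
move: zS yF; rewrite !inE => /andP [zF zS'] /andP [yS yFj].
have ya : y != a by apply: contraNneq yS => ->.
have [k' k'I [Fk aBk]] := step _ _ _ _ jI aF aB yFj ya zF.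
apply: (IH k' S) => //.
  by rewrite Fk !inE aF andbT; apply/orP; right; rewrite eq_sym.
have E : S :\: F k' = (S :\: F j) :\ z.
  apply/setP => w; rewrite Fk !inE.
  case: (eqVneq w z) => [->|wz] /=; first by [].
  case: (eqVneq w y) => [->|wy] /=; first by rewrite (negbTE yS) andbF.
  by [].
have := cardsD1 z (S :\: F j); rewrite !inE zF zS' Sk add1n => -[->].
by rewrite E.
Qed.
End Eq.

End Claim.

Theorem claim4p2 (d n m : nat) (F : 'I_m -> {set 'I_n}) (B : 'I_m -> {set 'I_n}) :
  1 <= d -> d + 2 <= n ->
  injective F ->
  (forall i, #|F i| = d.+1) ->
  VCdim_le F d ->
  (forall i, admissible F i (B i)) ->
  (forall i (B' : {set 'I_n}), admissible F i B' -> #|B'| <= #|B i|) ->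
  #|[set i : 'I_m | #|B i| == d]| <= 'C(n.-1, d) /\
  (#|[set i : 'I_m | #|B i| == d]| = 'C(n.-1, d) <->
   exists a : 'I_n,
     [set F i | i in [set i : 'I_m | #|B i| == d]] =
     [set S : {set 'I_n} | (#|S| == d.+1) && (a \in S)]).
Proof.
move=> d1 dn Finj Fc _ adm _.
have n0 : 0 < n by apply: leq_trans dn; rewrite addn2.
have bd := @bound d n m F B Finj Fc adm.
rewrite mulnC leq_pmul2l // in bd.
split => //; split.
- move=> Eq.
  have surj : forall (T : {set 'I_n}) (z : 'I_n), #|T| = d -> z \notin T ->
      exists2 k, k \in II d n m B &
      ((z \in F k /\ F k :\ z = T) \/ (z \notin F k /\ B k = T)).
    move=> T z Td zT.
    have /eqP E : @phi n m F B @: @DD d n m B == @Fl d n.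
      rewrite eqEcard (@phi_sub d n m F B Fc adm) card_Fl.
      rewrite (card_in_imset (@phi_inj d n m F B Finj Fc adm)).
      rewrite /DD /II cardsX cardsT card_ord.
      by rewrite -Eq mulnC leqnn.
    have : (T, z) \in @Fl d n by rewrite inE Td eqxx zT.
    rewrite -E => /imsetP [[k y] /setXP [kI _]]; rewrite /phi /=.
    case: ifP => zk [E1 E2]; subst y; exists k => //; [left|right]; split => //.
    by rewrite zk.
  have : 0 < #|II d n m B|.
    rewrite /II Eq bin_gt0 -ltnS prednK //.
    by apply: leq_trans dn; rewrite addn2 ltnS ltnW.
  case/card_gt0P => i0 i0I.
  have [a aF aB] := @exw n m F B adm i0.
  exists a; apply/eqP; rewrite eq_sym eqEcard card_star card_imset // -Eq leqnn andbT.
  apply/subsetP => S; rewrite inE => /andP [/eqP Sd aS].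
  have [l lI <-] := @reach d n m F B Finj Fc adm surj a _ i0 S i0I aF aB Sd aS (erefl _).
  exact: imset_f.
- move=> [a E]; by rewrite -(card_star d n a) -E card_imset.
Qed.
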